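(* Let $\Lambda$ be a row-finite $k$-graph with no sources and $R$ a commutative ring with $1$. Let $\mu,\nu\in\Lambda$ with $s(\mu)=s(\nu)$ and $r\in R\setminus\{0\}$ such that $r\,s_\mu s_{\nu^*}\in\mathcal{D}'$. Then $(\mu,\nu)$ is a cycline pair.
   Context: A $k$-graph is a countable category $\Lambda$ (vertices $\Lambda^0$, paths, maps $r,s$) with a degree functor $d:\Lambda\to\mathbb{N}^k$ satisfying unique factorization: if $d(\lambda)=m+n$ there are unique $\mu,\nu$ with $s(\mu)=r(\nu)$, $d(\mu)=m,d(\nu)=n$, $\lambda=\mu\nu$. $v\Lambda=\{\lambda:r(\lambda)=v\}$, $v\Lambda^n$ those of degree $n$; row-finite with no sources means each $v\Lambda^n$ is finite and nonempty. ${\rm KP}_R(\Lambda)$ is the universal $R$-algebra generated by $p_v$ ($v\in\Lambda^0$), $s_\lambda,s_{\lambda^*}$ ($d(\lambda)\ne0$) with relations (KP1) $p_v$ mutually orthogonal idempotents; (KP2) $s_\lambda s_\mu=s_{\lambda\mu}$, $s_{\mu^*}s_{\lambda^*}=s_{(\lambda\mu)^*}$, $p_{r(\lambda)}s_\lambda=s_\lambda=s_\lambda p_{s(\lambda)}$, $p_{s(\lambda)}s_{\lambda^*}=s_{\lambda^*}=s_{\lambda^*}p_{r(\lambda)}$ when $r(\mu)=s(\lambda)$; (KP3) $s_{\lambda^*}s_\mu=\delta_{\lambda,\mu}p_{s(\lambda)}$ when $d(\lambda)=d(\mu)$; (KP4) $p_v=\sum_{\lambda\in v\Lambda^n}s_\lambda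 s_{\lambda^*}$ for $n\ne0$. Convention $s_v=s_{v^*}=p_v$. $\mathcal{D}$ is the $R$-subalgebra generated by $\{s_\mu s_{\mu^*}:\mu\in\Lambda\}$, and $\mathcal{D}'=\{a\in{\rm KP}_R(\Lambda): ad=da\ \forall d\in\mathcal{D}\}$. A pair $(\alpha,\beta)$ with $s(\alpha)=s(\beta)$ is a cycline pair if $s_{\alpha\gamma}s_{(\alpha\gamma)^*}=s_{\beta\gamma}s_{(\beta\gamma)^*}$ for all $\gamma\in s(\alpha)\Lambda$. *)

(* Defs.v *)
From HB Require Import structures.
From mathcomp Require Import all_boot all_order all_algebra.
Set Implicit Arguments. Unset Strict Implicit. Unset Printing Implicit Defensive.
Import GRing.Theory.
Local Open Scope ring_scope.

Definition degk (k : nat) := {ffun 'I_k -> nat}.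
Definition deg0 (k : nat) : degk k := [ffun => 0%N].
Definition degadd (k : nat) (m n : degk k) : degk k := [ffun i => (m i + n i)%N].

(* k-graphs: countable categories (objects = vertices, morphisms =     *)
(* paths) with a degree functor d : Lambda -> N^k satisfying the       *)
(* unique factorisation property.  comp l m is the composite "l m"     *)
(* (meaningful when src l = rng m).                                    *)
Record kgraph (k : nat) := KGraph {
  kvert : countType;
  kpath : countType;
  rng : kpath -> kvert;
  src : kpath -> kvert;
  idp : kvert -> kpath;
  comp : kpath -> kpath -> kpath;
  dg : kpath -> degk k;
  rng_idp : forall v, rng (idp v) = v;
  src_idp : forall v, src (idp v) = v;
  rng_comp : forall l m, src l = rng m -> rng (comp l m) = rng l;
  src_comp : forall l m, src l = rng m -> src (comp l m) = src m;
  comp_idl : forall l, comp (idp (rng l)) l = l;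
  comp_idr : forall l, comp l (idp (src l)) = l;
  compA : forall l m n, src l = rng m -> src m = rng n ->
            comp l (comp m n) = comp (comp l m) n;
  dg_idp : forall v, dg (idp v) = deg0 k;
  dg_comp : forall l m, src l = rng m -> dg (comp l m) = degadd (dg l) (dg m);
  unique_factorisation : forall l (m n : degk k), dg l = degadd m n ->
    exists mu nu, [/\ src mu = rng nu, dg mu = m, dg nu = n & l = comp mu nu]
      /\ forall mu' nu', src mu' = rng nu' -> dg mu' = m -> dg nu' = n ->
            l = comp mu' nu' -> mu' = mu /\ nu' = nu
}.

Definition enumerates (k : nat) (L : kgraph k) (v : kvert L) (n : degk k)
  (s : seq (kpath L)) : Prop :=
  uniq s /\ forall l, l \in s <-> (rng l = v /\ dg l = n).

Definition row_finite_no_sources (k : nat) (L : kgraph k) : Prop :=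
  forall (v : kvert L) (n : degk k),
    (exists s, enumerates v n s) /\ (exists l, rng l = v /\ dg l = n).

Definition nu_alg_axioms (R : comPzRingType) (A : lmodType R) (mul : A -> A -> A)
  : Prop :=
  [/\ forall x y z, mul x (mul y z) = mul (mul x y) z,
      forall (a : R) x y z, mul (a *: x + y) z = a *: mul x z + mul y z
    & forall (a : R) x y z, mul z (a *: x + y) = a *: mul z x + mul z y].

Definition nu_alg_hom (R : comPzRingType) (A : lmodType R) (mulA : A -> A -> A)
  (B : lmodType R) (mulB : B -> B -> B) (f : A -> B) : Prop :=
  (forall (a : R) x y, f (a *: x + y) = a *: f x + f y) /\
  (forall x y, f (mulA x y) = mulB (f x) (f y)).

(* s_v = s_{v^*} = p_v, the families s, ss (ss l stands for s_{l^*})    *)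
(* are given on all paths, with s (idp v) = ss (idp v) = p v.           *)
Definition KP_family (k : nat) (L : kgraph k) (R : comPzRingType)
  (B : lmodType R) (mul : B -> B -> B)
  (p : kvert L -> B) (s ss : kpath L -> B) : Prop :=
  [/\
      forall v, s (idp v) = p v /\ ss (idp v) = p v,
      (forall v, mul (p v) (p v) = p v) /\
      (forall v w, v <> w -> mul (p v) (p w) = 0),
      [/\ forall l m, src l = rng m -> mul (s l) (s m) = s (comp l m),
          forall l m, src l = rng m -> mul (ss m) (ss l) = ss (comp l m),
          forall l, mul (p (rng l)) (s l) = s l /\ s l = mul (s l) (p (src l))
        & forall l, mul (p (src l)) (ss l) = ss l /\ ss l = mul (ss l) (p (rng l))],
      (forall l m, dg l = dg m ->
         mul (ss l) (s m) = if l == m then p (src l) else 0)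
    &
      (forall v (n : degk k) (e : seq (kpath L)), n != deg0 k -> enumerates v n e ->
         p v = \sum_(l <- e) mul (s l) (ss l))].

Definition is_KP_algebra (k : nat) (L : kgraph k) (R : comPzRingType)
  (A : lmodType R) (mul : A -> A -> A)
  (p : kvert L -> A) (s ss : kpath L -> A) : Prop :=
  [/\ nu_alg_axioms mul,
      KP_family mul p s ss
    & forall (B : lmodType R) (mulB : B -> B -> B)
             (q : kvert L -> B) (t tt : kpath L -> B),
        nu_alg_axioms mulB -> KP_family mulB q t tt ->
        (exists f : A -> B, [/\ nu_alg_hom mul mulB f,
                                forall v, f (p v) = q v,
                                forall l, f (s l) = t l
                              & forall l, f (ss l) = tt l]) /\
        (forall f g : A -> B,
           nu_alg_hom mul mulB f -> nu_alg_hom mul mulB g ->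
           (forall v, f (p v) = g (p v)) ->
           (forall l, f (s l) = g (s l)) ->
           (forall l, f (ss l) = g (ss l)) ->
           forall x, f x = g x)].

Inductive in_D (k : nat) (L : kgraph k) (R : comPzRingType)
  (A : lmodType R) (mul : A -> A -> A) (s ss : kpath L -> A) : A -> Prop :=
| inD_gen : forall mu, in_D mul s ss (mul (s mu) (ss mu))
| inD_0 : in_D mul s ss 0
| inD_add : forall x y, in_D mul s ss x -> in_D mul s ss y -> in_D mul s ss (x + y)
| inD_scale : forall (a : R) x, in_D mul s ss x -> in_D mul s ss (a *: x)
| inD_mul : forall x y, in_D mul s ss x -> in_D mul s ss y -> in_D mul s ss (mul x y).

Definition in_D' (k : nat) (L : kgraph k) (R : comPzRingType)
  (A : lmodType R) (mul : A -> A -> A) (s ss : kpath L -> A) (a : A) : Prop :=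
  forall d, in_D mul s ss d -> mul a d = mul d a.

Definition cycline_pair (k : nat) (L : kgraph k) (R : comPzRingType)
  (A : lmodType R) (mul : A -> A -> A) (s ss : kpath L -> A)
  (alpha beta : kpath L) : Prop :=
  src alpha = src beta /\
  forall g, rng g = src alpha ->
    mul (s (comp alpha g)) (ss (comp alpha g)) =
    mul (s (comp beta g)) (ss (comp beta g)).

(* Main.v *)
Require Import Defs.
From HB Require Import structures.
From mathcomp Require Import all_boot all_order all_algebra.
From mathcomp Require boolp.
From Stdlib Require Import ProofIrrelevance FunctionalExtensionality ClassicalEpsilon.
Local Open Scope ring_scope.
Local Notation comp := Defs.comp.
Local Notation compA := Defs.compA.
Set Implicit Arguments. Unset Strict Implicit. Unset Printing Implicit Defensive.
Import GRing.Theory.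

Module OpM.
Section Op.
Variables (R : comPzRingType) (X : Type).
Definition lin (T : (X -> R) -> (X -> R)) :=
  forall (a : R) f g, T (fun x => a * f x + g x) = fun x => a * T f x + T g x.
Record op := Op { opf :> (X -> R) -> (X -> R); opl : lin opf }.
Lemma op_eq (T U : op) : (forall f x, T f x = U f x) -> T = U.
Proof.
case: T U => [T HT] [U HU] /= H.
have E : T = U by apply: functional_extensionality => f; apply: functional_extensionality => x; exact: H.
subst; congr Op; exact: proof_irrelevance.
Qed.
HB.instance Definition _ := boolp.gen_eqMixin op.
HB.instance Definition _ := boolp.gen_choiceMixin op.
Lemma lin0 : lin (fun f x => 0). Proof. by move=> a f g; apply: functional_extensionality=> x; rewrite mulr0 addr0. Qed.
Definition op0 := Op lin0.
Lemma linD (T U : op) : lin (fun f x => T f x + U f x).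
Proof. move=> a f g; apply: functional_extensionality=> x; rewrite !opl.
by rewrite mulrDr addrACA. Qed.
Definition opD T U := Op (linD T U).
Lemma linN (T : op) : lin (fun f x => - T f x).
Proof. move=> a f g; apply: functional_extensionality=> x; rewrite !opl.
by rewrite opprD mulrN. Qed.
Definition opN T := Op (linN T).
Lemma linZ c (T : op) : lin (fun f x => c * T f x).
Proof. move=> a f g; apply: functional_extensionality=> x; rewrite !opl.
by rewrite mulrDr mulrCA. Qed.
Definition opZ c T := Op (linZ c T).
Lemma linM (T U : op) : lin (fun f => T (U f)).
Proof. move=> a f g; by rewrite !opl. Qed.
Definition opM T U := Op (linM T U).
Lemma opDA : associative opD. Proof. by move=> *; apply: op_eq=> f x /=; rewrite addrA. Qed.
Lemma opDC : commutative opD. Proof. by move=> *; apply: op_eq=> f x /=; rewrite addrC. Qed.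
Lemma opD0 : left_id op0 opD. Proof. by move=> *; apply: op_eq=> f x /=; rewrite add0r. Qed.
Lemma opDN : left_inverse op0 opN opD. Proof. by move=> *; apply: op_eq=> f x /=; rewrite addNr. Qed.
HB.instance Definition _ := GRing.isZmodule.Build op opDA opDC opD0 opDN.
Lemma opZA a b v : opZ a (opZ b v) = opZ (a * b) v.
Proof. by apply: op_eq=> f x /=; rewrite mulrA. Qed.
Lemma opZ1 : left_id 1 opZ. Proof. by move=> *; apply: op_eq=> f x /=; rewrite mul1r. Qed.
Lemma opZDr : right_distributive opZ +%R. Proof. by move=> *; apply: op_eq=> f x /=; rewrite mulrDr. Qed.
Lemma opZDl v : {morph opZ^~ v: a b / a + b}. Proof. by move=> *; apply: op_eq=> f x /=; rewrite mulrDl. Qed.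
HB.instance Definition _ := GRing.Zmodule_isLmodule.Build R op opZA opZ1 opZDr opZDl.

Lemma opf_add (T U : op) f x : (T + U) f x = T f x + U f x. Proof. by []. Qed.
Lemma opf_zero f x : (0 : op) f x = 0. Proof. by []. Qed.
Lemma opf_scale a (T : op) f x : (a *: T) f x = a * T f x. Proof. by []. Qed.
Lemma opf_sum (I : Type) (s : seq I) (F : I -> op) f x :
  (\sum_(i <- s) F i) f x = \sum_(i <- s) F i f x.
Proof. elim: s => [|a s IH]; first by rewrite !big_nil.
by rewrite !big_cons opf_add IH. Qed.
Lemma op_alg : forall (x y z : op), opM x (opM y z) = opM (opM x y) z /\ True.
Proof. by move=> *; split=> //; apply: op_eq. Qed.
End Op.
End OpM.
Import OpM.

Section Deg.
Variable k : nat.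
Lemma degaddC (m n : degk k) : degadd m n = degadd n m.
Proof. by apply/ffunP=> i; rewrite !ffunE addnC. Qed.
Lemma degaddA (m n p : degk k) : degadd m (degadd n p) = degadd (degadd m n) p.
Proof. by apply/ffunP=> i; rewrite !ffunE addnA. Qed.
Lemma degadd0 (m : degk k) : degadd (deg0 k) m = m.
Proof. by apply/ffunP=> i; rewrite !ffunE. Qed.
Lemma degaddI (m n n' : degk k) : degadd m n = degadd m n' -> n = n'.
Proof. move=> H; apply/ffunP=> i; move/ffunP: H => /(_ i); rewrite !ffunE.
by move/eqP; rewrite eqn_add2l => /eqP. Qed.
End Deg.

Section KG.
Variables (k : nat) (L : kgraph k).
Notation P := (kpath L).


Lemma fac_uniq (a b a' b' : P) : src a = rng b -> src a' = rng b' -> dg a = dg a' ->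
  comp a b = comp a' b' -> a = a' /\ b = b'.
Proof.
move=> h h' hd E.
have hdb : dg b = dg b'.
  apply: (@degaddI _ (dg a)); rewrite -dg_comp // E dg_comp // hd //.
have [mu [nu [[_ _ _ _] U]]] := unique_factorisation (dg_comp h).
have [-> ->] := U a b h erefl erefl erefl.
by have [-> ->] := U a' b' h' (esym hd) (esym hdb) E.
Qed.

Lemma dg0_idp (l : P) : dg l = deg0 k -> l = idp (rng l).
Proof.
move=> h.
have := @fac_uniq (idp (rng l)) l l (idp (src l)).
rewrite src_idp rng_idp comp_idl comp_idr dg_idp h => /(_ erefl erefl erefl erefl).
by case=> ->.
Qed.

Definition spl (l : P) (m : degk k) : P * P :=
  epsilon (inhabits (l, l))
    (fun pr => src pr.1 = rng pr.2 /\ dg pr.1 = m /\ l = comp pr.1 pr.2).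

Lemma spl_ex (l : P) m n : dg l = degadd m n ->
  [/\ src (spl l m).1 = rng (spl l m).2, dg (spl l m).1 = m,
      l = comp (spl l m).1 (spl l m).2 & dg (spl l m).2 = n].
Proof.
move=> hl.
have [mu [nu [[h1 h2 h3 h4] _]]] := unique_factorisation hl.
have := @epsilon_spec _ (inhabits (l, l))
    (fun pr => src pr.1 = rng pr.2 /\ dg pr.1 = m /\ l = comp pr.1 pr.2).
rewrite -/(spl l m); case=> [|H1 [H2 H3]]; first by exists (mu, nu).
split=> //; apply: (@degaddI _ m); rewrite -{1}H2 -dg_comp // -H3 hl //.
Qed.

Lemma spl_spec (a b : P) m : src a = rng b -> dg a = m -> spl (comp a b) m = (a, b).
Proof.
move=> h hd.
have hh : dg (comp a b) = degadd m (dg b) by rewrite dg_comp // hd.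
have [H1 H2 H3 _] := spl_ex hh.
have [E1 E2] := fac_uniq H1 h (etrans H2 (esym hd)) (esym H3).
by move: E1 E2; case: (spl _ _) => ? ? /= -> ->.
Qed.

Lemma comp_cancel (a b b' : P) : src a = rng b -> src a = rng b' ->
  comp a b = comp a b' -> b = b'.
Proof. by move=> h h' E; case: (fac_uniq h h' erefl E). Qed.

Record ipath := IP {
  xf : degk k -> P;
  xdg : forall n, dg (xf n) = n;
  xext : forall n d, exists t, src (xf n) = rng t /\ xf (degadd n d) = comp (xf n) t }.

Lemma ipath_eq (x y : ipath) : (forall n, xf x n = xf y n) -> x = y.
Proof.
case: x y => [f1 d1 e1] [f2 d2 e2] /= H.
have E : f1 = f2 by apply: functional_extensionality.
subst; f_equal; exact: proof_irrelevance.
Qed.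

Definition xrng (x : ipath) := rng (xf x (deg0 k)).

Lemma rng_xf x n : rng (xf x n) = xrng x.
Proof.
have [t [h E]] := xext x (deg0 k) n.
by move: E; rewrite degadd0 => ->; rewrite rng_comp.
Qed.

Definition shf m (x : ipath) n := (spl (xf x (degadd m n)) m).2.

Lemma shf_eq x m n t : src (xf x m) = rng t -> xf x (degadd m n) = comp (xf x m) t ->
  shf m x n = t.
Proof. by move=> h E; rewrite /shf E spl_spec // xdg. Qed.

Lemma xf_split x m n :
  [/\ src (xf x m) = rng (shf m x n), xf x (degadd m n) = comp (xf x m) (shf m x n)
    & dg (shf m x n) = n].
Proof.
have [t [h E]] := xext x m n.
rewrite (shf_eq h E); split=> //.
apply: (@degaddI _ m); rewrite -{1}(xdg x m) -dg_comp // -E xdg //.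
Qed.

Lemma shiftX_ext m x n d : exists t, src (shf m x n) = rng t /\
  shf m x (degadd n d) = comp (shf m x n) t.
Proof.
have [t [h E]] := xext x (degadd m n) d.
have [h1 E1 _] := xf_split x m n.
have hs : src (shf m x n) = rng t by rewrite -h E1 src_comp.
exists t; split=> //.
apply: shf_eq; first by rewrite rng_comp.
by rewrite degaddA E E1 compA.
Qed.

Lemma dg_shf m x n : dg (shf m x n) = n.
Proof. by case: (xf_split x m n). Qed.

Definition shiftX m x := @IP (shf m x) (dg_shf m x) (shiftX_ext m x).

Lemma xrng_shift m x : xrng (shiftX m x) = src (xf x m).
Proof. by rewrite /xrng /=; case: (xf_split x m (deg0 k)). Qed.

Lemma shift_shift m1 m2 x : shiftX m2 (shiftX m1 x) = shiftX (degadd m1 m2) x.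
Proof.
apply: ipath_eq => n /=.
have [h1 E1 d1] := xf_split x m1 (degadd m2 n).
have [h2 E2 d2] := xf_split x m1 m2.
have [h3 E3 d3] := xf_split x (degadd m1 m2) n.
apply: shf_eq => /=.
  by rewrite -(@src_comp _ _ (xf x m1)) // -E2 h3.
apply: (comp_cancel (a := xf x m1)) => //.
  by rewrite rng_comp // -h3 E2 src_comp.
by rewrite -E1 degaddA E3 E2 compA // -h3 E2 src_comp.
Qed.

Lemma shift_cond m1 m2 x (l mu : P) : src l = rng mu -> dg l = m1 ->
  (xf x (degadd m1 m2) == comp l mu) = (xf x m1 == l) && (shf m1 x m2 == mu).
Proof.
move=> h hd.
have [h1 E1 _] := xf_split x m1 m2.
rewrite E1; apply/eqP/andP.
  by move=> E; have [-> ->] := fac_uniq h1 h (etrans (xdg x m1) (esym hd)) E.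
by case=> /eqP -> /eqP ->.
Qed.

Definition catf (l : P) (y : ipath) n := (spl (comp l (xf y n)) n).1.

Section Cat.
Variables (l : P) (y : ipath) (h : src l = xrng y).

Lemma src_rng_y n : src l = rng (xf y n).
Proof. by rewrite rng_xf. Qed.
Local Hint Resolve src_rng_y : core.

Lemma catf_spec n : exists b,
  [/\ src (catf l y n) = rng b, comp l (xf y n) = comp (catf l y n) b,
      dg (catf l y n) = n & dg b = dg l].
Proof.
have hd : dg (comp l (xf y n)) = degadd n (dg l).
  by rewrite (dg_comp (src_rng_y n)) xdg degaddC.
have [H1 H2 H3 H4] := spl_ex hd.
by exists (spl (comp l (xf y n)) n).2.
Qed.

Lemma catf_eq n a b : src a = rng b -> dg a = n -> comp l (xf y n) = comp a b ->
  catf l y n = a.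
Proof. by move=> ha hd E; rewrite /catf E spl_spec. Qed.

Lemma dg_catf n : dg (catf l y n) = n.
Proof. by have [b [_ _ ->]] := catf_spec n. Qed.

Lemma catX_ext n d : exists t, src (catf l y n) = rng t /\
  catf l y (degadd n d) = comp (catf l y n) t.
Proof.
have [t [ht Et]] := xext y n d.
have [b [hb Eb dc db]] := catf_spec n.
have hbt : src b = rng t.
  by rewrite -ht -(src_comp hb) -Eb (src_comp (src_rng_y n)).
have dt : dg t = d.
  by apply: (@degaddI _ n); rewrite -{1}(xdg y n) -dg_comp // -Et xdg.
have hd : dg (comp b t) = degadd d (dg l).
  by rewrite dg_comp // dt db degaddC.
have [H1 H2 H3 _] := spl_ex hd.
set e1 := (spl (comp b t) d).1 in H1 H2 H3.
set e2 := (spl (comp b t) d).2 in H1 H2 H3.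
have hce : src (catf l y n) = rng e1 by rewrite hb -(rng_comp H1) -H3 rng_comp.
exists e1; split=> //.
apply: (catf_eq (b := e2)).
- by rewrite src_comp.
- by rewrite dg_comp // dc H2.
have hyn := src_rng_y n.
rewrite Et compA // Eb -compA // H3 compA //.
Qed.

Definition catX := @IP (catf l y) dg_catf catX_ext.

Lemma xrng_cat : xrng catX = rng l.
Proof.
rewrite /xrng /=; have [b [hb Eb _ _]] := catf_spec (deg0 k).
by rewrite -(rng_comp hb) -Eb rng_comp.
Qed.

Lemma catX_at : xf catX (dg l) = l.
Proof. by rewrite /= /catf spl_spec. Qed.

Lemma shift_cat : shiftX (dg l) catX = y.
Proof.
apply: ipath_eq => n /=.
apply: shf_eq; rewrite catX_at //.
have [t [ht Et]] := xext y n (dg l).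
apply: (catf_eq (b := t)).
- by rewrite src_comp.
- by rewrite dg_comp // xdg.
by rewrite degaddC Et compA.
Qed.
End Cat.

Lemma cat_shift (x : ipath) (l : P) (h : src l = xrng (shiftX (dg l) x)) :
  xf x (dg l) = l -> catX h = x.
Proof.
move=> hx; apply: ipath_eq => n /=.
have [h1 E1 _] := xf_split x (dg l) n.
have [t [ht Et]] := xext x n (dg l).
apply: (catf_eq (b := t)) => //; first by rewrite xdg.
by rewrite /= -{1}hx -E1 degaddC Et.
Qed.

Lemma cat_cat (l mu : P) (y : ipath) (h1 : src mu = xrng y) (h2 : src l = xrng (catX h1))
  (h3 : src (comp l mu) = xrng y) : catX h2 = catX h3.
Proof.
apply: ipath_eq => n /=.
have hlm : src l = rng mu by rewrite h2 xrng_cat.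
have hmy : src mu = rng (xf y n) := src_rng_y h1 n.
have hlc : src l = rng (catf mu y n) := src_rng_y h2 n.
have [e [he Ee de _]] := catf_spec h1 n.
have [b [hb Eb db _]] := catf_spec h2 n.
rewrite /= in hb Eb db.
have hbe : src b = rng e by rewrite -(src_comp hb) -Eb src_comp.
symmetry; apply: (catf_eq (b := comp b e)) => //.
  by rewrite rng_comp.
by rewrite -compA // Ee compA // Eb -compA.
Qed.

Section Exist.
Hypothesis HL : row_finite_no_sources L.
Variable v : kvert L.
Definition jone (j : nat) : degk k := [ffun => j].

Definition ext (w : kvert L) : P :=
  epsilon (inhabits (idp w)) (fun l => rng l = w /\ dg l = jone 1).
Lemma ext_spec w : rng (ext w) = w /\ dg (ext w) = jone 1.
Proof.
apply: (@epsilon_spec _ (inhabits (idp w)) (fun l => rng l = w /\ dg l = jone 1)).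
by have [_ [l Hl]] := HL w (jone 1); exists l.
Qed.

Fixpoint lam (j : nat) : P :=
  if j is j'.+1 then comp (lam j') (ext (src (lam j'))) else idp v.

Lemma lam_spec j : rng (lam j) = v /\ dg (lam j) = jone j.
Proof.
elim: j => [|j [IH1 IH2]] /=.
  by rewrite rng_idp dg_idp; split=> //; apply/ffunP=> i; rewrite !ffunE.
have [E1 E2] := ext_spec (src (lam j)).
rewrite rng_comp ?E1 // dg_comp ?E1 // IH2 E2; split=> //.
by apply/ffunP=> i; rewrite !ffunE addn1.
Qed.

Lemma lam_ext i j : exists t, src (lam i) = rng t /\ lam (i + j) = comp (lam i) t.
Proof.
elim: j => [|j [t [h E]]].
  by exists (idp (src (lam i))); rewrite addn0 rng_idp comp_idr.
have [E1 _] := ext_spec (src (lam (i + j))).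
rewrite addnS /=; set w := ext _ in E1 *.
have hte : src t = rng w by rewrite E1 E src_comp.
exists (comp t w); split; first by rewrite rng_comp.
by rewrite E -compA.
Qed.

Lemma jone_split (n : degk k) j : (forall i, n i <= j)%N ->
  jone j = degadd n [ffun i => j - n i]%N.
Proof. by move=> H; apply/ffunP=> i; rewrite !ffunE subnKC. Qed.

Lemma pre_lam j1 j2 (n : degk k) : (forall i, n i <= j1)%N -> (j1 <= j2)%N ->
  (spl (lam j2) n).1 = (spl (lam j1) n).1.
Proof.
move=> H12 H.
have [t [ht Et]] := lam_ext j1 (j2 - j1).
rewrite subnKC // in Et.
have hd : dg (lam j1) = degadd n [ffun i => j1 - n i]%N by rewrite (lam_spec j1).2 (jone_split H12).
have [H1 H2 H3 _] := spl_ex hd.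
have hbt : src (spl (lam j1) n).2 = rng t by rewrite -(src_comp H1) -H3.
rewrite Et {1}H3 -compA // spl_spec //.
by rewrite rng_comp.
Qed.

Definition sumd (n : degk k) := (\sum_(i < k) n i)%N.
Lemma le_sumd (n : degk k) i : (n i <= sumd n)%N.
Proof. by rewrite /sumd (bigD1 i) //= leq_addr. Qed.

Definition xv (n : degk k) := (spl (lam (sumd n)) n).1.

Lemma xv_spec n : exists b, [/\ src (xv n) = rng b, lam (sumd n) = comp (xv n) b & dg (xv n) = n].
Proof.
have hd : dg (lam (sumd n)) = degadd n [ffun i => sumd n - n i]%N.
  by rewrite (lam_spec _).2 (@jone_split n) // => i; exact: le_sumd.
have [H1 H2 H3 _] := spl_ex hd.
by exists (spl (lam (sumd n)) n).2.
Qed.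

Lemma xv_dg n : dg (xv n) = n.
Proof. by have [b [_ _ ->]] := xv_spec n. Qed.

Lemma xv_ext n d : exists t, src (xv n) = rng t /\ xv (degadd n d) = comp (xv n) t.
Proof.
set M := sumd (degadd n d).
have [e [he Ee de]] := xv_spec (degadd n d).
rewrite -/M in Ee.
have hd : dg (xv (degadd n d)) = degadd n d := de.
have [H1 H2 H3 H4] := spl_ex hd.
set a := (spl (xv (degadd n d)) n).1 in H1 H2 H3.
set b := (spl (xv (degadd n d)) n).2 in H1 H3.
have hnM : forall i, (n i <= M)%N.
  by move=> i; apply: leq_trans (le_sumd _ i); rewrite ffunE leq_addr.
have hxa : xv n = a.
  rewrite /xv -(@pre_lam (sumd n) M n) //; last first.
    apply/bigop.leq_sum => i _; rewrite ffunE leq_addr //.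
  by move=> i; apply: le_sumd.
  have hbe : src b = rng e by rewrite -(src_comp H1) -H3.
  by rewrite Ee H3 -compA // spl_spec // rng_comp.
by exists b; rewrite hxa.
Qed.

Definition xpath := @IP xv xv_dg xv_ext.

Lemma xpath_rng : xrng xpath = v.
Proof.
rewrite /xrng /=; have [b [hb Eb _]] := xv_spec (deg0 k).
by rewrite -(rng_comp hb) -Eb (lam_spec _).1.
Qed.
End Exist.
End KG.

Section Rep.
Variables (k : nat) (L : kgraph k) (R : comPzRingType).
Notation P := (kpath L).
Notation X := (ipath L).
Notation op := (op R X).

Definition Sf (l : P) (f : X -> R) (x : X) : R :=
  if xf x (dg l) == l then f (shiftX (dg l) x) else 0.
Definition catT (l : P) (y : X) : X :=
  match src l =P xrng y with ReflectT h => catX h | ReflectF _ => y end.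
Lemma catT_eq l y (h : src l = xrng y) : catT l y = catX h.
Proof. by rewrite /catT; case: eqP => // h'; rewrite (eq_irrelevance h h'). Qed.
Definition Ssf (l : P) (f : X -> R) (y : X) : R :=
  if src l == xrng y then f (catT l y) else 0.

Lemma linS l : lin (Sf l).
Proof. move=> a f g; apply: functional_extensionality => x; rewrite /Sf.
by case: ifP => _; rewrite ?mulr0 ?addr0. Qed.
Lemma linSs l : lin (Ssf l).
Proof. move=> a f g; apply: functional_extensionality => x; rewrite /Ssf.
by case: ifP => _; rewrite ?mulr0 ?addr0. Qed.

Definition t l : op := Op (linS l).
Definition tt l : op := Op (linSs l).
Definition q v : op := t (idp v).

Lemma xf0 (x : X) : xf x (deg0 k) = idp (xrng x).
Proof. by rewrite (dg0_idp (xdg x _)) rng_xf. Qed.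

Lemma shift0 (x : X) : shiftX (deg0 k) x = x.
Proof.
apply: ipath_eq => n /=; apply: shf_eq; rewrite xf0 ?src_idp ?rng_xf //.
by rewrite degadd0 -(rng_xf x n) comp_idl.
Qed.

Lemma q_eval v f x : q v f x = if xrng x == v then f x else 0.
Proof.
rewrite /= /Sf dg_idp xf0 shift0.
case: (xrng x =P v) => [->|ne]; first by rewrite eqxx.
case: eqP => // /(congr1 (fun l : P => rng l)); rewrite /= !rng_idp => E; by case: ne.
Qed.

Lemma cat_idp v (y : X) (h : src (idp v) = xrng y) : catX h = y.
Proof.
apply: ipath_eq => n /=.
have hv : v = rng (xf y n) by rewrite rng_xf -h src_idp.
apply: (catf_eq (b := idp (src (xf y n)))).
- by rewrite rng_idp.
- exact: xdg.
by rewrite comp_idr hv comp_idl.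
Qed.

Lemma tt_idp v : tt (idp v) = q v.
Proof.
apply: op_eq => f x; rewrite q_eval /= /Ssf src_idp eq_sym.
case: eqP => // h; rewrite (catT_eq (l := idp v) (etrans (src_idp v) (esym h))).
by rewrite cat_idp.
Qed.

Definition opM := @OpM.opM R X.

Lemma opM_eval (T U : op) f x : opM T U f x = T (U f) x. Proof. by []. Qed.
Lemma t_eval l f x : t l f x = Sf l f x. Proof. by []. Qed.
Lemma tt_eval l f x : tt l f x = Ssf l f x. Proof. by []. Qed.
Lemma zero_eval f x : (0 : op) f x = 0. Proof. by []. Qed.

Lemma KPf : KP_family opM q t tt.
Proof.
split.
- by move=> v; split=> //; rewrite tt_idp.
- split.
    by move=> v; apply: op_eq => f x; rewrite opM_eval !q_eval; case: (xrng x == v).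
  move=> v w ne; apply: op_eq => f x; rewrite opM_eval zero_eval !q_eval.
  case: eqP => // ->; case: eqP => // E; by case: ne.
- split.
  + move=> l m h; apply: op_eq => f x; rewrite opM_eval !t_eval /Sf dg_comp //.
    rewrite shift_cond //=; case: (xf x (dg l) == l) => //=.
    by rewrite /Sf /= shift_shift.
  + move=> l m h; apply: op_eq => f y; rewrite opM_eval !tt_eval /Ssf src_comp //.
    case: eqP => // h1; rewrite tt_eval /Ssf (catT_eq h1) xrng_cat -h eqxx.
    have h2 : src l = xrng (catX h1) by rewrite xrng_cat.
    have h3 : src (comp l m) = xrng y by rewrite src_comp.
    by rewrite (catT_eq h2) (catT_eq h3) cat_cat.
  + move=> l; split; apply: op_eq => f x.
      rewrite opM_eval q_eval t_eval /Sf; case: (xf x (dg l) =P l) => [E|]; last by case: ifP.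
      by rewrite -E rng_xf eqxx.
    rewrite opM_eval !t_eval /Sf; case: eqP => // E.
    by rewrite q_eval xrng_shift E eqxx.
  + move=> l; split; apply: op_eq => f x.
      rewrite opM_eval q_eval tt_eval /Ssf eq_sym; by case: (src l == xrng x).
    rewrite opM_eval !tt_eval /Ssf; case: eqP => // h.
    by rewrite q_eval (catT_eq h) xrng_cat eqxx.
- move=> l m hd; apply: op_eq => f y.
  rewrite opM_eval tt_eval /Ssf; case: eqP => h; last first.
    by case: eqP => // _; rewrite q_eval; case: eqP => // E; case: h; rewrite E.
  rewrite t_eval /Sf (catT_eq h) -hd catX_at.
  case: eqP => [E|ne]; last by rewrite zero_eval.
  by rewrite q_eval shift_cat h eqxx.
- move=> v n e nz [ue he]; apply: op_eq => f x.
  rewrite q_eval opf_sum.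
  have -> : \sum_(l <- e) opM (t l) (tt l) f x =
            \sum_(l <- e) (if xf x n == l then f x else 0).
    rewrite big_seq_cond [RHS]big_seq_cond; apply: eq_bigr => l /andP [le _].
    have [_ dl] := (he l).1 le.
    rewrite opM_eval t_eval /Sf dl; case: eqP => // E.
    rewrite tt_eval /Ssf xrng_shift E eqxx.
    subst n.
    have h : src l = xrng (shiftX (dg l) x) by rewrite xrng_shift E.
    by rewrite (catT_eq h) cat_shift.
  have -> : (xrng x == v) = (xf x n \in e).
    apply/eqP/idP.
      by move=> E; apply/he; rewrite rng_xf xdg.
    by move/he => [<- _]; rewrite rng_xf.
  elim: e ue {he} => [|a e IH] /=; first by rewrite big_nil.
  case/andP=> ane ue; rewrite big_cons -IH // in_cons.
  case: (xf x n =P a) => [->|_] /=; last by rewrite add0r.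
  by rewrite (negbTE ane) addr0.
Qed.

Lemma opM_alg : nu_alg_axioms opM.
Proof.
split.
- by move=> a b c; apply: op_eq.
- by move=> a x y z; apply: op_eq.
- move=> a x y z; apply: op_eq => f w.
  have := opl z a (x f) (y f); move/(congr1 (fun F => F w)) => H; exact: H.
Qed.

Lemma rpv (HL : row_finite_no_sources L) (A : lmodType R) (mul : A -> A -> A)
  (p : kvert L -> A) (s ss : kpath L -> A)
  (HKP : is_KP_algebra mul p s ss) (r : R) (hr : r != 0) v : r *: p v != 0.
Proof.
case: HKP => _ _ U.
have [[f [[fl fm] fp _ _]] _] := U _ opM q t tt opM_alg KPf.
apply/eqP => E.
have f0 : f 0 = 0.
  have H := fl 1 0 0; rewrite scaler0 addr0 scale1r in H.
  by apply: (@addrI _ (f 0)); rewrite addr0 -H.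
have := fl r (p v) 0; rewrite addr0 E f0 fp addr0 => H.
have := congr1 (fun T : op => T (fun _ => 1) (xpath HL v)) H.
rewrite zero_eval opf_scale q_eval xpath_rng eqxx mulr1 => r0.
by move: hr; rewrite -r0 eqxx.
Qed.
End Rep.

Lemma sum_if_eq (V : zmodType) (T : eqType) (s : seq T) (a : T) (c : V) :
  uniq s -> \sum_(l <- s) (if a == l then c else 0) = if a \in s then c else 0.
Proof.
elim: s => [|b s IH] /=; first by rewrite big_nil.
case/andP=> bs us; rewrite big_cons IH // in_cons.
case: (a =P b) => [->|_] /=; last by rewrite add0r.
by rewrite (negbTE bs) addr0.
Qed.

Section Alg.
Variables (R : comPzRingType) (A : lmodType R) (mul : A -> A -> A).
Hypothesis HA : nu_alg_axioms mul.

Lemma mulA x y z : mul x (mul y z) = mul (mul x y) z.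
Proof. by case: HA. Qed.
Lemma ldist a x y z : mul (a *: x + y) z = a *: mul x z + mul y z.
Proof. by case: HA. Qed.
Lemma rdist a x y z : mul z (a *: x + y) = a *: mul z x + mul z y.
Proof. by case: HA. Qed.
Lemma mul0l z : mul 0 z = 0.
Proof.
have H := ldist 1 0 0 z; rewrite scaler0 addr0 scale1r in H.
by apply: (@addrI _ (mul 0 z)); rewrite addr0 -H.
Qed.
Lemma mul0r z : mul z 0 = 0.
Proof.
have H := rdist 1 0 0 z; rewrite scaler0 addr0 scale1r in H.
by apply: (@addrI _ (mul z 0)); rewrite addr0 -H.
Qed.
Lemma mulZl a x z : mul (a *: x) z = a *: mul x z.
Proof. by have := ldist a x 0 z; rewrite addr0 mul0l addr0. Qed.
Lemma mulZr a x z : mul z (a *: x) = a *: mul z x.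
Proof. by have := rdist a x 0 z; rewrite addr0 mul0r addr0. Qed.
Lemma mulDl x y z : mul (x + y) z = mul x z + mul y z.
Proof. by have := ldist 1 x y z; rewrite !scale1r. Qed.
Lemma mulDr x y z : mul z (x + y) = mul z x + mul z y.
Proof. by have := rdist 1 x y z; rewrite !scale1r. Qed.
Lemma mul_sumr (I : Type) (s : seq I) (F : I -> A) z :
  mul z (\sum_(i <- s) F i) = \sum_(i <- s) mul z (F i).
Proof. elim: s => [|a s IH]; first by rewrite !big_nil mul0r.
by rewrite !big_cons mulDr IH. Qed.
Lemma mul_suml (I : Type) (s : seq I) (F : I -> A) z :
  mul (\sum_(i <- s) F i) z = \sum_(i <- s) mul (F i) z.
Proof. elim: s => [|a s IH]; first by rewrite !big_nil mul0l.
by rewrite !big_cons mulDl IH. Qed.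
End Alg.

Section KPA.
Variables (k : nat) (L : kgraph k) (R : comPzRingType) (A : lmodType R)
  (mul : A -> A -> A) (p : kvert L -> A) (s ss : kpath L -> A).
Hypothesis HKP : is_KP_algebra mul p s ss.
Notation P := (kpath L).

Lemma HA : nu_alg_axioms mul. Proof. by case: HKP. Qed.
Lemma HF : KP_family mul p s ss. Proof. by case: HKP. Qed.
Notation mA := (mulA HA).

Lemma sS (l m : P) : src l = rng m -> s (comp l m) = mul (s l) (s m).
Proof. by case: HF => _ _ [h _ _ _] _ _ => /h ->. Qed.
Lemma ssS (l m : P) : src l = rng m -> ss (comp l m) = mul (ss m) (ss l).
Proof. by case: HF => _ _ [_ h _ _] _ _ => /h ->. Qed.
Lemma K3 (l m : P) : dg l = dg m -> mul (ss l) (s m) = if l == m then p (src l) else 0.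
Proof. by case: HF => _ _ _ h _ => /h. Qed.
Lemma K3e (l : P) : mul (ss l) (s l) = p (src l).
Proof. by rewrite K3 // eqxx. Qed.
Lemma pid v : mul (p v) (p v) = p v.
Proof. by case: HF => _ [h _] _ _ _. Qed.

Lemma L1 X l : mul (mul X (ss l)) (s l) = mul X (p (src l)).
Proof. by rewrite -mA K3e. Qed.
Lemma L2 X l : mul (mul X (p (rng l))) (s l) = mul X (s l).
Proof. by case: HF => _ _ [_ _ h _] _ _; rewrite -mA (h l).1. Qed.
Lemma L3 X l : mul (mul X (s l)) (p (src l)) = mul X (s l).
Proof. by case: HF => _ _ [_ _ h _] _ _; rewrite -mA -(h l).2. Qed.
Lemma L4 X l : mul (mul X (ss l)) (p (rng l)) = mul X (ss l).
Proof. by case: HF => _ _ [_ _ _ h] _ _; rewrite -mA -(h l).2. Qed.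
Lemma L5 X l : mul (mul X (p (src l))) (ss l) = mul X (ss l).
Proof. by case: HF => _ _ [_ _ _ h] _ _; rewrite -mA (h l).1. Qed.
Lemma sp l : mul (s l) (p (src l)) = s l.
Proof. by case: HF => _ _ [_ _ h _] _ _; rewrite -(h l).2. Qed.

Definition Th (l : P) := mul (s l) (ss l).

Lemma Th_orth (l m : P) : dg l = dg m -> mul (Th l) (Th m) = if l == m then Th l else 0.
Proof.
move=> hd; rewrite /Th mA -(mA (s l) (ss l) (s m)) K3 //.
by case: eqP => [<-|_]; rewrite ?sp ?(mul0r HA) ?(mul0l HA).
Qed.

Lemma Th_exp l n e : n != deg0 k -> enumerates (src l) n e ->
  Th l = \sum_(d <- e) Th (comp l d).
Proof.
move=> nz en.
have K4 : p (src l) = \sum_(d <- e) mul (s d) (ss d) by case: HF => _ _ _ _ h; exact: (h _ _ _ nz en).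
rewrite {1}/Th -sp K4 (mul_sumr HA) (mul_suml HA) big_seq [RHS]big_seq.
apply: eq_bigr => d de.
have [hd _] := (en.2 d).1 de.
by rewrite /Th sS // ssS // !mA.
Qed.

Lemma key (mu nu g : P) (hsrc : src mu = src nu) (hg : rng g = src mu) (r : R)
  (hD : in_D' mul s ss (r *: mul (s mu) (ss nu))) :
  r *: Th (comp mu g) = r *: Th (comp nu g).
Proof.
have hgn : rng g = src nu by rewrite hg.
have hm : src mu = rng g by [].
have hn : src nu = rng g by [].
set a' := mul (s mu) (ss nu).
set P' := Th (comp mu g); set Q' := Th (comp nu g).
set M := mul (s (comp mu g)) (ss (comp nu g)).
set y := mul (s (comp nu g)) (ss (comp mu g)).
have E1 : mul a' Q' = M.
  rewrite /a' /Q' /M /Th !sS // !ssS // !mA L1 hn L2 //.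
have E2 : mul P' a' = M.
  rewrite /a' /P' /M /Th !sS // !ssS // !mA L1 hm L4 //.
have E3 : mul M y = P'.
  rewrite /y /P' /M /Th !sS // !ssS // !mA L1 hn L4 L1 L3 //.
have E4 : mul y M = Q'.
  rewrite /y /Q' /M /Th !sS // !ssS // !mA L1 hm L4 L1 L3 //.
have E5 : mul a' y = P'.
  rewrite /a' /y /P' /Th !sS // !ssS // !mA L1 hn L2 //.
have E6 : mul y a' = Q'.
  rewrite /a' /y /Q' /Th !sS // !ssS // !mA L1 hm L4 //.
have hP := hD _ (inD_gen mul s ss (comp mu g)).
have hQ := hD _ (inD_gen mul s ss (comp nu g)).
rewrite -/P' -/Q' in hP hQ.
have rP : r *: P' = r *: mul Q' P'.
  have H1 : mul Q' (mul (r *: a') y) = r *: P'.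
    by rewrite mA -hQ !(mulZl HA) E1 E3.
  by rewrite -H1 (mulZl HA) E5 (mulZr HA).
have rQ : r *: Q' = r *: mul Q' P'.
  have H1 : mul (mul y (r *: a')) P' = r *: Q'.
    by rewrite -mA hP !(mulZr HA) E2 E4.
  by rewrite -H1 (mulZr HA) E6 (mulZl HA).
by rewrite rP rQ.
Qed.

Lemma sub_E (HL : row_finite_no_sources L) (r : R) (hr : r != 0) (E1 E2 : seq P) N :
  uniq E1 -> uniq E2 -> (forall l, l \in E1 -> dg l = N) -> (forall l, l \in E2 -> dg l = N) ->
  r *: \sum_(l <- E1) Th l = r *: \sum_(l <- E2) Th l -> {subset E1 <= E2}.
Proof.
move=> u1 u2 d1 d2 E l lE1; apply/negPn/negP => lE2.
have S : forall E, uniq E -> (forall l, l \in E -> dg l = N) ->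
    mul (Th l) (r *: \sum_(l' <- E) Th l') = r *: (if l \in E then Th l else 0).
  move=> E' u' d'; rewrite (mulZr HA) (mul_sumr HA).
  rewrite (eq_big_seq (fun l' => if l == l' then Th l else 0)); first by rewrite sum_if_eq.
  by move=> l' l'E; rewrite Th_orth // (d1 _ lE1) d' .
have := S _ u1 d1; rewrite E S // lE1 (negbTE lE2) scaler0 => H.
have : mul (mul (ss l) (r *: Th l)) (s l) = r *: p (src l).
  rewrite (mulZr HA) (mulZl HA) /Th mA K3e -mA K3e pid //.
rewrite -H (mul0r HA) (mul0l HA) => /esym/eqP.
by rewrite (negbTE (rpv HL HKP hr _)).
Qed.

Lemma cancel_Th (HL : row_finite_no_sources L) (r : R) (hr : r != 0) (al be : P) :
  (0 < k)%N -> r *: Th al = r *: Th be -> Th al = Th be.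
Proof.
move=> hk E.
set one := jone k 1.
set n1 := degadd (dg be) one; set n2 := degadd (dg al) one.
have nz : forall m : degk k, degadd m one != deg0 k.
  move=> m; apply/eqP => /ffunP /(_ (Ordinal hk)); rewrite !ffunE addn1 //.
have [[e1 en1] _] := HL (src al) n1.
have [[e2 en2] _] := HL (src be) n2.
have X1 := Th_exp (nz _) en1; have X2 := Th_exp (nz _) en2.
rewrite -(big_map (comp al) xpredT Th) in X1.
rewrite -(big_map (comp be) xpredT Th) in X2.
set N := degadd (dg al) n1.
have inj : forall (a : P) e n, enumerates (src a) n e -> uniq (map (comp a) e).
  move=> a e n [ue he]; rewrite map_inj_in_uniq // => x y xe ye.
  have [hx _] := (he x).1 xe; have [hy _] := (he y).1 ye.
  by apply: comp_cancel; rewrite ?hx ?hy.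
have dgm : forall (a : P) e n l, enumerates (src a) n e -> l \in map (comp a) e ->
    dg l = degadd (dg a) n.
  move=> a e n l [ue he] /mapP [d de ->].
  by have [hd dd] := (he d).1 de; rewrite dg_comp // dd.
have d1 : forall l, l \in map (comp al) e1 -> dg l = N.
  by move=> l /(dgm _ _ _ _ en1).
have d2 : forall l, l \in map (comp be) e2 -> dg l = N.
  move=> l /(dgm _ _ _ _ en2) ->; rewrite /N /n1 /n2.
  by apply/ffunP => i; rewrite !ffunE addnA (addnC (dg be i)) -addnA.
rewrite X1 X2 in E *.
have u1 := inj _ _ _ en1; have u2 := inj _ _ _ en2.
have s12 := sub_E HL hr u1 u2 d1 d2 E.
have s21 := sub_E HL hr u2 u1 d2 d1 (esym E).
apply: perm_big; apply: uniq_perm => // l; apply/idP/idP; [exact: s12 | exact: s21].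
Qed.
End KPA.

Unset Implicit Arguments.
Theorem lemma4p9 (k : nat) (L : kgraph k) (HL : row_finite_no_sources L)
  (R : comPzRingType) (A : lmodType R) (mul : A -> A -> A)
  (p : kvert L -> A) (s ss : kpath L -> A)
  (HKP : is_KP_algebra mul p s ss)
  (mu nu : kpath L) (hsrc : src mu = src nu)
  (r : R) (hr : r != 0)
  (hD : in_D' mul s ss (r *: mul (s mu) (ss nu))) :
  cycline_pair mul s ss mu nu.
Proof.
split=> // g hg.
case: (posnP k) => [k0|hk].
  subst k.
  have d0 : forall l : kpath L, dg l = deg0 0 by move=> l; apply/ffunP => -[].
  have E : forall l : kpath L, l = idp (src l).
    move=> l; rewrite {1}(dg0_idp (d0 l)).
    by have := dg0_idp (d0 l) => /(congr1 (fun x : kpath L => src x)); rewrite src_idp => ->.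
  by rewrite (E mu) (E nu) hsrc.
apply: (cancel_Th HKP HL hr hk).
exact: (key HKP hsrc hg hD).
Qed.
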